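(* Let $F,G\colon I\to\mathsf{Top}$ be diagrams of topological spaces and $\alpha\colon F\Rightarrow G$ a natural transformation such that each $\alpha_i\colon F(i)\to G(i)$ is a closed inclusion. Suppose that for each $i\in I$ the commutative square formed by $\alpha_i$, the colimit maps $\mu_i\colon F(i)\to\mathrm{colim}(F)$, $\nu_i\colon G(i)\to\mathrm{colim}(G)$ and the induced map $\alpha_*\colon\mathrm{colim}(F)\to\mathrm{colim}(G)$ is Cartesian in the category of sets (i.e. the canonical function from $F(i)$ to the set-theoretic pullback of $G(i)\to\mathrm{colim}(G)\leftarrow\mathrm{colim}(F)$ is a bijection). Then $\alpha_*$ is a closed inclusion. The same holds with ''closed inclusion'' replaced by ''open inclusion'' throughout. *)

(* Defs.v *)
From HB Require Import structures.
From mathcomp Require Import all_boot all_algebra.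
From mathcomp Require Import boolp classical_sets functions topology.
Set Implicit Arguments. Unset Strict Implicit. Unset Printing Implicit Defensive.
Local Open Scope classical_set_scope.

Record category := Category {
  ob : Type;
  hom : ob -> ob -> Type;
  idc : forall a, hom a a;
  comp : forall a b c, hom b c -> hom a b -> hom a c;
  comp_idl : forall a b (f : hom a b), comp (idc b) f = f;
  comp_idr : forall a b (f : hom a b), comp f (idc a) = f;
  comp_assoc : forall a b c d (f : hom c d) (g : hom b c) (h : hom a b),
      comp f (comp g h) = comp (comp f g) h }.

Record diagram (I : category) := Diagram {
  dob : ob I -> topologicalType;
  dmap : forall a b, hom a b -> dob a -> dob b;
  dmap_cont : forall a b (f : hom a b), continuous (dmap f);
  dmap_id : forall a (x : dob a), dmap (idc a) x = x;
  dmap_comp : forall a b c (f : hom b c) (g : hom a b) (x : dob a),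
      dmap (comp f g) x = dmap f (dmap g x) }.

Arguments dmap {I} d {a b} _ _.
Arguments dob {I} d _.

Definition nat_trans (I : category) (F G : diagram I)
    (alpha : forall i, dob F i -> dob G i) : Prop :=
  (forall i, continuous (alpha i)) /\
  (forall a b (f : hom a b) (x : dob F a),
      alpha b (dmap F f x) = dmap G f (alpha a x)).

Definition cocone (I : category) (F : diagram I) (X : topologicalType)
    (mu : forall i, dob F i -> X) : Prop :=
  (forall i, continuous (mu i)) /\
  (forall a b (f : hom a b) (x : dob F a), mu b (dmap F f x) = mu a x).

Definition is_colimit (I : category) (F : diagram I) (X : topologicalType)
    (mu : forall i, dob F i -> X) : Prop :=
  cocone mu /\
  forall (Z : topologicalType) (nu : forall i, dob F i -> Z), cocone nu ->
    exists! h : X -> Z, continuous h /\ (forall i x, h (mu i x) = nu i x).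

Definition closed_inclusion (X Y : topologicalType) (f : X -> Y) : Prop :=
  injective f /\ continuous f /\ (forall A : set X, closed A -> closed (f @` A)).
Definition open_inclusion (X Y : topologicalType) (f : X -> Y) : Prop :=
  injective f /\ continuous f /\ (forall A : set X, open A -> open (f @` A)).

Definition set_cartesian (A B C D : Type) (a : A -> B) (m : A -> C)
    (n : B -> D) (s : C -> D) : Prop :=
  injective (fun x => (a x, m x)) /\
  [set (a x, m x) | x in [set: A]] = [set p : B * C | n p.1 = s p.2].

(* Main.v *)
From HB Require Import structures.
Require Import Defs.
From mathcomp Require Import all_boot all_algebra.
From mathcomp Require Import boolp classical_sets functions topology.
Set Implicit Arguments. Unset Strict Implicit. Unset Printing Implicit Defensive.
Local Open Scope classical_set_scope.

Definition sier := bool.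
HB.instance Definition _ := Choice.on sier.
Definition sier_op : set_system sier := fun A => A false -> A true.
Lemma sier_opT : sier_op setT. Proof. by []. Qed.
Lemma sier_opI : setI_closed sier_op.
Proof. by move=> A B hA hB [/hA ? /hB ?]. Qed.
Lemma sier_opU (I : Type) (f : I -> set sier) : (forall i, sier_op (f i)) ->
  sier_op (\bigcup_i f i).
Proof. by move=> h [i _ fi]; exists i => //; apply: h. Qed.
HB.instance Definition _ := isOpenTopological.Build sier sier_opT sier_opI sier_opU.

Lemma sier_cont (X : topologicalType) (f : X -> sier) :
  open (f @^-1` [set true]) -> continuous f.
Proof.
move=> o; apply/continuousP => A; rewrite /open /= /sier_op => oA.
have [At|Af] := pselect (A true); last first.
  have -> : f @^-1` A = set0.
    apply/seteqP; split => x //=; case: (f x) => // /oA //.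
  exact: open0.
have [Aff|Aff] := pselect (A false).
  have -> : f @^-1` A = setT by apply/seteqP; split => x //= _; case: (f x).
  exact: openT.
have -> : f @^-1` A = f @^-1` [set true] => //.
apply/seteqP; split => x /=; case: (f x) => //.
Qed.

Definition indis := bool.
HB.instance Definition _ := Choice.on indis.
Definition indis_op : set_system indis := fun A => A false <-> A true.
Lemma indis_opT : indis_op setT. Proof. by []. Qed.
Lemma indis_opI : setI_closed indis_op.
Proof. by move=> A B hA hB; split=> -[/hA ? /hB ?]. Qed.
Lemma indis_opU (I : Type) (f : I -> set indis) : (forall i, indis_op (f i)) ->
  indis_op (\bigcup_i f i).
Proof. by move=> h; split=> -[i _ fi]; exists i => //; apply/h. Qed.
HB.instance Definition _ := isOpenTopological.Build indis indis_opT indis_opI indis_opU.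

Lemma indis_cont (X : topologicalType) (f : X -> indis) : continuous f.
Proof.
apply/continuousP => A; rewrite /open /= /indis_op => oA.
have [At|Af] := pselect (A true); last first.
  have -> : f @^-1` A = set0.
    by apply/seteqP; split => x //=; case: (f x) => // /oA.
  exact: open0.
have -> : f @^-1` A = setT.
  by apply/seteqP; split => x //= _; case: (f x) => //; apply/oA.
exact: openT.
Qed.

Lemma colim_surj (I : category) (G : diagram I) (X : topologicalType)
  (nu : forall i, dob G i -> X) : is_colimit nu -> forall y, exists i x, nu i x = y.
Proof.
move=> [_ U] y.
have cc : cocone (fun i (_ : dob G i) => (true : indis)).
  by split=> // i; exact: cst_continuous.
have [h [_ hu]] := U _ _ cc.
have e1 := hu (fun _ => true) (conj (fun _ => @cst_continuous _ _ _ _) (fun _ _ => erefl)).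
have ex : forall i x, (`[< exists i0 x0, nu i0 x0 = nu i x >] : indis) = true.
  by move=> i x; apply/asboolP; exists i, x.
have e2 := hu (fun y => (`[< exists i x, nu i x = y >] : indis))
  (conj (@indis_cont _ _) ex).
have := congr1 (fun f => f y) (etrans (esym e1) e2) => /= /esym /asboolP; exact.
Qed.

Lemma colim_open (I : category) (G : diagram I) (X : topologicalType)
  (nu : forall i, dob G i -> X) (U : set X) : is_colimit nu ->
  (forall j, open (nu j @^-1` U)) -> open U.
Proof.
move=> cn oU; have sj := colim_surj cn; case: cn => -[_ nat] Un.
pose g := fun i (x : dob G i) => (`[< U (nu i x) >] : sier).
have cc : cocone g.
  split=> [i|a b f x]; last by rewrite /g nat.
  apply: sier_cont; have -> : g i @^-1` [set true] = nu i @^-1` U.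
    by apply/seteqP; split => x /= ; rewrite /g => /asboolP.
  exact: oU.
have [h [[hc hg] _]] := Un _ _ cc.
have -> : U = h @^-1` [set true].
  apply/seteqP; split => y /=; have [i [x <-]] := sj y; rewrite hg /g => /asboolP //.
apply: (proj1 (continuousP _) hc); by [].
Qed.

Unset Implicit Arguments.
Theorem lemma6p1 (I : category) (F G : diagram I)
    (alpha : forall i, dob F i -> dob G i)
    (XF XG : topologicalType)
    (mu : forall i, dob F i -> XF) (nu : forall i, dob G i -> XG)
    (astar : XF -> XG) :
  nat_trans alpha ->
  is_colimit mu -> is_colimit nu ->
  continuous astar -> (forall i x, astar (mu i x) = nu i (alpha i x)) ->
  (forall i, set_cartesian (alpha i) (mu i) (nu i) astar) ->
  ((forall i, closed_inclusion (alpha i)) -> closed_inclusion astar) /\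
  ((forall i, open_inclusion (alpha i)) -> open_inclusion astar).
Proof.
move=> _ cF cG astc ae cart.
have pb : forall j y a, nu j y = astar a -> exists x, alpha j x = y /\ mu j x = a.
  move=> j y a e; have [_ E] := cart j.
  have : [set p : dob G j * XF | nu j p.1 = astar p.2] (y, a) by [].
  by rewrite -E => -[x _ [<- <-]]; exists x.
have inj : (forall i, injective (alpha i)) -> injective astar.
  move=> ai p q e; have [i [x px]] := colim_surj cF p.
  have [x' [ex' <-]] := pb i (alpha i x) q ltac:(by rewrite -ae px).
  by rewrite -px (ai _ _ _ ex').
have pre : forall j A, nu j @^-1` (astar @` A) = alpha j @` (mu j @^-1` A).
  move=> j A; apply/seteqP; split => y /=.
    by move=> [a Aa /esym /pb [x [<- ea]]]; exists x => //=; rewrite ea.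
  by move=> [x /= Ax <-]; exists (mu j x) => //; rewrite ae.
split.
- move=> ci; split; first by apply: inj => i; case: (ci i).
  split => // A cA; rewrite -openC; apply: (colim_open cG) => j.
  rewrite -preimage_setC openC pre; case: (ci j) => _ [_]; apply.
  by apply: (proj1 (continuous_closedP _) (proj1 (proj1 cF) j)).
- move=> ci; split; first by apply: inj => i; case: (ci i).
  split => // A cA; apply: (colim_open cG) => j.
  rewrite pre; case: (ci j) => _ [_]; apply.
  by apply: (proj1 (continuousP _) (proj1 (proj1 cF) j)).
Qed.
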